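(* Let $(E,B,p,\Gamma)$ be a compact graph bundle and $M\subseteq E$ a compact set. If $\operatorname{End}_s(M)=M$, then $M$ is nowhere dense in $E$.
   Context: Compact graph bundle $(E,B,p,\Gamma)$: $E,B$ compact metric, $\Gamma$ a graph (finite union of arcs pairwise disjoint or meeting only at end-points), $p:E\to B$ continuous surjection, locally trivial via homeomorphisms $h:p^{-1}(U)\to U\times\Gamma$ with $\mathrm{pr}_1\circ h=p$ (canonical). Open $n$-star $\Sigma_n$: $n$-star minus its $n$ end-points. Full sub-star: for $N\ge n\ge2$, an open star $\Sigma_n\subseteq\Sigma_N$ with the same central point that is the union of $n$ of the $N$ half-closed branches of $\Sigma_N$. For $E=B\times\Gamma$, $p=\mathrm{pr}_1$, $M$ closed: $x=(x_1,x_2)\in M$ is a strongly star-like interior point if $\operatorname{ord}(x_2,\Gamma)=N\ge2$ and there exist open $O\ni x_1$ in $B$ and an open $N$-star $\Sigma_N\subseteq\Gamma$, an open neighbourhood of $x_2$ with central point $x_2$, with $\mathcal G=M\cap(O\times\Sigma_N)$ satisfying $\mathcal G\cap(\{x_1\}\times\Gamma)=\{x_1\}\times\Sigma_k$, $k\ge2$, $\Sigma_k$ a full sub-star of $\Sigma_N$, and for every $z\in p(\mathcal G)$, $\mathcal G\cap(\{z\}\times\Gamma)=\{z\}\times\Sigma_{k(z),z}$, $2\le k(z)\le k$, $\Sigma_{k(z),z}$ a full sub-star of $\Sigma_k$; in general bundles transferred via canonical homeomorphisms. $\operatorname{Lint}_s(M)$ is the set of such points and $\operatorname{End}_s(M)=M\setminus\operatorname{Lint}_s(M)$.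 *)

(* Defs.v *)
From HB Require Import structures.
From mathcomp Require Import all_boot all_order all_algebra.
From mathcomp Require Import all_classical all_reals all_analysis.
Set Implicit Arguments. Unset Strict Implicit. Unset Printing Implicit Defensive.
Import Order.TTheory GRing.Theory Num.Theory.
Import numFieldNormedType.Exports.
Local Open Scope classical_set_scope.
Local Open Scope ring_scope.

Section Defs.
Variable R : realType.

Definition unit_seg : set R := [set s | 0 <= s <= 1].
Definition unit_seg_ho : set R := [set s | 0 <= s < 1].

(* an arc in X: a continuous injective map of [0,1] (an embedding since
   [0,1] is compact and X Hausdorff) *)
Definition is_arc (X : topologicalType) (a : R -> X) : Prop :=
  {within unit_seg, continuous a} /\
  (forall s t, unit_seg s -> unit_seg t -> a s = a t -> s = t).

Definition is_graph (X : topologicalType) : Prop :=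
  exists (m : nat) (a : 'I_m -> R -> X),
    (forall i, is_arc (a i)) /\
    (\bigcup_i (a i @` unit_seg) = [set: X]) /\
    (forall i j, i != j ->
       (a i @` unit_seg) `&` (a j @` unit_seg) `<=`
       ([set a i 0; a i 1] `&` [set a j 0; a j 1])).

(* Menger--Urysohn order: ord(x, X) <= n *)
Definition ord_le (X : topologicalType) (x : X) (n : nat) : Prop :=
  forall U, nbhs x U -> exists V : set X, [/\ open V, V x, V `<=` U &
     exists f : 'I_n -> X, closure V `\` V `<=` range f].

Definition ord_eq (X : topologicalType) (x : X) (N : nat) : Prop :=
  ord_le x N /\ forall m, ord_le x m -> (N <= m)%N.

Definition star_data (X : topologicalType) (c : X) (N : nat)
    (b : 'I_N -> R -> X) : Prop :=
  (forall i, is_arc (b i)) /\ (forall i, b i 0 = c) /\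
  (forall i j, i != j -> (b i @` unit_seg) `&` (b j @` unit_seg) = [set c]).

Definition branch (X : topologicalType) (N : nat) (b : 'I_N -> R -> X)
    (i : 'I_N) : set X := b i @` unit_seg_ho.

(* the union of the branches indexed by I; for I = setT this is the open
   N-star (the N-star minus its N end-points), and for #|I| >= 2 it is a
   full sub-star of it *)
Definition sub_star (X : topologicalType) (N : nat) (b : 'I_N -> R -> X)
    (I : {set 'I_N}) : set X := \bigcup_(i in [set i | i \in I]) branch b i.

Definition open_star (X : topologicalType) (N : nat) (b : 'I_N -> R -> X)
  : set X := sub_star b [set: 'I_N].

Definition local_triv (E B G : topologicalType) (p : E -> B) (U : set B)
    (h : E -> B * G) (g : B * G -> E) : Prop :=
  open U /\ (forall y, U (p y) -> (h y).1 = p y) /\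
  [/\
      (forall y, U (p y) -> g (h y) = y),
      (forall z, U z.1 -> h (g z) = z /\ U (p (g z))),
      {within p @^-1` U, continuous h} &
      {within [set z | U z.1], continuous g}].

Definition compact_graph_bundle (E B G : pseudoMetricType R) (p : E -> B)
  : Prop :=
  [/\ hausdorff_space E /\ compact [set: E],
      hausdorff_space B /\ compact [set: B],
      hausdorff_space G /\ is_graph G,
      continuous p /\ (forall b, exists y, p y = b) &
      forall b : B, exists U h g, U b /\ @local_triv E B G p U h g].

Definition Lint_s (E B G : pseudoMetricType R) (p : E -> B) (M : set E)
    (x : E) : Prop :=
  M x /\
  exists (U : set B) (h : E -> B * G) (g : B * G -> E),
    [/\ U (p x), local_triv p U h g &
    let HM := h @` (M `&` p @^-1` U) in
    let x1 := (h x).1 in let x2 := (h x).2 in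
    exists (N : nat) (O : set B) (b : 'I_N -> R -> G) (I : {set 'I_N}),
      [/\ ord_eq x2 N /\ (2 <= N)%N,
          open O /\ O x1 /\ O `<=` U,
          star_data x2 b, open (open_star b) &
          let GG := HM `&` [set z | O z.1 /\ open_star b z.2] in
          [/\ (2 <= #|I|)%N,
              (forall t, GG (x1, t) <-> sub_star b I t) &
              forall z, (exists t, GG (z, t)) ->
                exists J : {set 'I_N}, [/\ J \subset I, (2 <= #|J|)%N &
                  forall t, GG (z, t) <-> sub_star b J t]]]].

Definition End_s (E B G : pseudoMetricType R) (p : E -> B) (M : set E)
  : set E := M `\` [set x | @Lint_s E B G p M x].

End Defs.

(* Main.v *)
Require Import Defs.
From HB Require Import structures.
From mathcomp Require Import all_boot all_order all_algebra.
From mathcomp Require Import all_classical all_reals all_analysis.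
From mathcomp Require Import ring lra zify.
Set Implicit Arguments. Unset Strict Implicit. Unset Printing Implicit Defensive.
Import Order.TTheory GRing.Theory Num.Theory.
Import numFieldNormedType.Exports.
Local Open Scope classical_set_scope.
Local Open Scope ring_scope.

Section S.
Variable R : realType.
Lemma ed_of_within (X : topologicalType) (a : R -> X) (A : set R) :
 {within A, continuous a} -> forall t, A t -> forall W, nbhs (a t) W ->
 exists2 d : R, 0 < d & forall u, A u -> `|u - t| < d -> W (a u).
Proof.
move=> /subspace_continuousP ca t At W nW.
have := ca t At W nW.
rewrite /= => /nbhs_ballP [d d0 H]; exists d => // u Au tu.
apply: H => //. rewrite /ball /=. by rewrite distrC.
Qed.

Lemma within_of_ed (X : topologicalType) (a : R -> X) (A : set R) :
 (forall t, A t -> forall W, nbhs (a t) W ->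
 exists2 d : R, 0 < d & forall u, A u -> `|u - t| < d -> W (a u)) ->
 {within A, continuous a}.
Proof.
move=> H; apply/subspace_continuousP => t At W nW.
have [d d0 Hd] := H t At W nW.
rewrite /=; apply/nbhs_ballP; exists d => // u.
rewrite /ball /= => tu Au; apply: Hd => //; by rewrite distrC.
Qed.
Lemma boundary_pt (X : topologicalType) (phi : R -> X) (c d : R) (V : set X) :
  c < d ->
  (forall t, c <= t <= d -> forall W, nbhs (phi t) W ->
     exists2 e : R, 0 < e & forall u, c <= u <= d -> `|u - t| < e -> W (phi u)) ->
  open V -> V (phi c) -> ~ V (phi d) ->
  exists t, [/\ c < t <= d, closure V (phi t) & ~ V (phi t)].
Proof.
move=> cd cont oV Vc nVd.
set S := [set t | c <= t <= d /\ ~ V (phi t)].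
have Sne : S !=set0 by exists d; split => //; rewrite lexx ltW.
have Slb : lbound S c by move=> t [/andP[]].
have hinf : has_inf S by split => //; exists c.
set ti := inf S.
have cti : c <= ti by apply: lb_le_inf.
have tid : ti <= d.
  by apply: (ge_inf (ex_intro _ c Slb)); split => //; rewrite lexx ltW.
have ctid : c <= ti <= d by rewrite cti tid.
have nVti : ~ V (phi ti).
  move=> Vti.
  have [e e0 He] := cont ti ctid V (open_nbhs_nbhs (conj oV Vti)).
  have [s Ss ste] := inf_adherent e0 hinf.
  have tis : ti <= s by apply: (ge_inf (ex_intro _ c Slb)).
  case: Ss => /andP[cs sd] nVs; apply: nVs; apply: He; first by rewrite cs.
  rewrite ger0_norm ?subr_ge0 //; lra.
exists ti; split => //.
- rewrite tid andbT lt_neqAle cti andbT; apply/eqP => ecti; apply: nVti.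
  by rewrite -ecti.
- move=> B nB.
  have [e e0 He] := cont ti ctid B nB.
  have cti' : c < ti.
    rewrite lt_neqAle cti andbT; apply/eqP => ecti; apply: nVti; by rewrite -ecti.
  set u := Num.max c (ti - e / 2).
  have cu : c <= u by rewrite le_max lexx.
  have uti : u < ti by rewrite gt_max cti' /=; lra.
  have ud : u <= d by lra.
  have nSu : ~ S u.
    move=> Su; have := ge_inf (ex_intro _ c Slb) Su; rewrite -/ti; lra.
  exists (phi u); split.
  + apply: contrapT => nVu; apply: nSu; split => //; by rewrite cu.
  + apply: He; first by rewrite cu.
    rewrite ltr0_norm ?subr_lt0 //.
    have : ti - e / 2 <= u by rewrite le_max lexx orbT.
    lra.
Qed.
Lemma boundary_pt' (X : topologicalType) (phi : R -> X) (c d : R) (V : set X) :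
  c < d ->
  (forall t, c <= t <= d -> forall W, nbhs (phi t) W ->
     exists2 e : R, 0 < e & forall u, c <= u <= d -> `|u - t| < e -> W (phi u)) ->
  open V -> V (phi d) -> ~ V (phi c) ->
  exists t, [/\ c <= t < d, closure V (phi t) & ~ V (phi t)].
Proof.
move=> cd cont oV Vd nVc.
have := @boundary_pt X (fun u => phi (c + d - u)) c d V cd.
case.
- move=> t /andP[ct td] W nW.
  have [e e0 He] := cont (c + d - t) (ltac:(apply/andP; split; lra)) W nW.
  exists e => // u /andP[cu ud] ut; apply: He; first by apply/andP; split; lra.
  have -> : c + d - u - (c + d - t) = - (u - t) by ring.
  by rewrite normrN.
- by [].
- by rewrite (_ : c + d - c = d) //; ring.
- by rewrite (_ : c + d - d = c) //; ring.
- move=> t [/andP[ct td] H1 H2]; exists (c + d - t); split => //; apply/andP; split; lra.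
Qed.
Lemma img_closed (X : topologicalType) (a : R -> X) (c d : R) :
  hausdorff_space X -> is_arc a -> 0 <= c -> d <= 1 ->
  closed (a @` [set t | c <= t <= d]).
Proof.
move=> hX [ca ia] c0 d1; apply: compact_closed => //.
apply: continuous_compact.
  apply: continuous_subspaceW ca => t /andP[ct td]; rewrite /unit_seg /=.
  apply/andP; split; lra.
have -> : [set t | c <= t <= d] = `[c, d]%classic.
  by apply/seteqP; split => t /=; rewrite in_itv.
exact: segment_compact.
Qed.

Lemma arc_inj (X : topologicalType) (a : R -> X) s t :
  is_arc a -> 0 <= s <= 1 -> 0 <= t <= 1 -> a s = a t -> s = t.
Proof. by move=> [_ ia] hs ht; apply: ia. Qed.

Lemma open_mid (X : topologicalType) (m : nat) (a : 'I_m -> R -> X) (i : 'I_m)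
  (c d : R) :
  hausdorff_space X ->
  (forall i, is_arc (a i)) ->
  (\bigcup_i (a i @` @unit_seg R) = [set: X]) ->
  (forall i j, i != j ->
       (a i @` @unit_seg R) `&` (a j @` @unit_seg R) `<=`
       ([set a i 0; a i 1] `&` [set a j 0; a j 1])) ->
  0 < c -> c < d -> d < 1 -> open (a i @` [set t | c < t < d]).
Proof.
move=> hX harc hcov hint c0 cd d1.
have -> : a i @` [set t | c < t < d] =
   ~` ((\bigcup_(j in [set j | j != i]) (a j @` @unit_seg R)) `|`
       (a i @` [set t | 0 <= t <= c] `|` a i @` [set t | d <= t <= 1])).
  apply/seteqP; split.
  - move=> z [t /andP[ct td] <-].
    have t01 : 0 <= t <= 1 by apply/andP; split; lra.
    case=> [[j /= ji [u u01 eq]]|[[u /andP[u0 uc] eq]|[u /andP[du u1] eq]]].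
    + have := hint j i ji (a i t); case.
        by split; [exists u|exists t].
      move=> _ /= [] /(arc_inj (harc i) t01).
      * have : 0 <= (0:R) <= 1 by rewrite lexx ler01.
        move=> h /(_ h); lra.
      * have : 0 <= (1:R) <= 1 by rewrite lexx ler01.
        move=> h /(_ h); lra.
    + have u01 : 0 <= u <= 1 by apply/andP; split; lra.
      have := arc_inj (harc i) u01 t01 eq; lra.
    + have u01 : 0 <= u <= 1 by apply/andP; split; lra.
      have := arc_inj (harc i) u01 t01 eq; lra.
  - move=> z nC.
    have : [set: X] z by [].
    rewrite -hcov; case=> j _ [t /andP[t0 t1] eq].
    case: (eqVneq j i) => [ji|ji].
    + subst j; exists t => //.
      have [tc|ct] := leP t c.
        by exfalso; apply: nC; right; left; exists t => //; apply/andP; split.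
      have [dt|td] := leP d t.
        by exfalso; apply: nC; right; right; exists t => //; apply/andP; split.
      by apply/andP; split.
    + by exfalso; apply: nC; left; exists j => //; exists t => //; apply/andP; split.
apply: closed_openC; apply: closedU.
  apply: closed_bigcup; first exact: finite_finset.
  move=> j _; apply: img_closed => //; try lra.
apply: closedU; apply: img_closed => //; try lra.
Qed.
Lemma arc_affine (X : topologicalType) (a : R -> X) (s k : R) :
  is_arc a -> k != 0 -> (forall t, 0 <= t <= 1 -> 0 <= s + k * t <= 1) ->
  is_arc (fun t => a (s + k * t)).
Proof.
move=> [ca ia] k0 hk; split.
- apply: within_of_ed => t t01 W nW.
  have [d d0 Hd] := ed_of_within ca (hk t t01) nW.
  have k0' : 0 < `|k| by rewrite normr_gt0.
  exists (d / `|k|); first by apply: divr_gt0.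
  move=> u u01 ut; apply: Hd; first exact: hk.
  have -> : s + k * u - (s + k * t) = k * (u - t) by ring.
  by rewrite normrM mulrC -ltr_pdivlMr.
- move=> u v hu hv /(ia _ _ (hk _ hu) (hk _ hv)) e.
  by apply: (mulfI k0); apply: (addrI s).
Qed.

Lemma cont_sub (X : topologicalType) (a : R -> X) (c d : R) :
  is_arc a -> 0 <= c -> d <= 1 ->
  forall t, c <= t <= d -> forall W, nbhs (a t) W ->
  exists2 e : R, 0 < e & forall u, c <= u <= d -> `|u - t| < e -> W (a u).
Proof.
move=> [ca _] c0 d1 t /andP[ct td] W nW.
have t01 : 0 <= t <= 1 by apply/andP; split; lra.
have [e e0 He] := ed_of_within ca t01 nW.
exists e => // u /andP[cu ud]; apply: He; apply/andP; split; lra.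
Qed.

Lemma small2 (x y : R) : 0 < x -> 0 < y -> exists2 z, 0 < z & z < x /\ z < y.
Proof.
move=> x0 y0; have [xy|yx] := leP x y.
  by exists (x / 2); [lra | split; lra].
by exists (y / 2); [lra | split; lra].
Qed.

Definition cf (e : R) (k : 'I_2) : R := if val k == 0%N then e else - e.

Definition mkstar (X : topologicalType) (a : R -> X) (s e : R) : 'I_2 -> R -> X :=
  fun k t => a (s + cf e k * t).

Lemma star_ok (X : topologicalType) (a : R -> X) (s e : R) :
  is_arc a -> 0 < e -> 0 <= s - e -> s + e <= 1 ->
  star_data (a s) (mkstar a s e).
Proof.
move=> harc e0 se1 se2; split; [|split].
- move=> k; apply: arc_affine => //.
    by rewrite /cf; case: ifP => _; rewrite ?oppr_eq0 gt_eqF.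
  by move=> t /andP[t0 t1]; rewrite /cf; case: ifP => _; apply/andP; split; nra.
- by move=> k; rewrite /mkstar mulr0 addr0.
- move=> j k jk; apply/seteqP; split; last first.
    move=> z -> ; split; exists 0; rewrite /mkstar ?mulr0 ?addr0 //;
      by rewrite /unit_seg /= lexx ler01.
  move=> z [[t t01 <-] [u u01 eq]].
  have := arc_inj harc _ _ eq.
  case/andP: t01 => t0 t1; case/andP: u01 => u0 u1.
  case: j k jk eq => [[|[|jj]] jp] [[|[|kk]] kp] //= _ eq;
    rewrite /mkstar /cf /= in eq * => h.
  + have : s + - e * u = s + e * t by apply: h; apply/andP; split; nra.
    have -> : t = 0 by nra.
    by rewrite mulr0 addr0.
  + have : s + e * u = s + - e * t by apply: h; apply/andP; split; nra.
    have -> : t = 0 by nra.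
    by rewrite mulr0 addr0.
Qed.

Lemma open_star_eq (X : topologicalType) (a : R -> X) (s e : R) :
  0 < e -> open_star (mkstar a s e) = a @` [set t | s - e < t < s + e].
Proof.
move=> e0; apply/seteqP; split.
- move=> z [k _ [t /andP[t0 t1] <-]]; exists (s + cf e k * t) => //.
  by rewrite /cf; case: ifP => _; apply/andP; split; nra.
- move=> z [t /andP[lt ut] <-].
  have [st|ts] := leP s t.
  + exists ord0; first by rewrite /= ?in_setT ?inE.
    exists ((t - s) / e).
      apply/andP; split; first by apply: divr_ge0; lra.
      by rewrite ltr_pdivrMr //; lra.
    rewrite /mkstar /cf /= mulrC divfK ?gt_eqF //.
    by congr a; ring.
  + exists ord_max; first by rewrite /= ?in_setT ?inE.
    exists ((s - t) / e).
      apply/andP; split; first by apply: divr_ge0; lra.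
      by rewrite ltr_pdivrMr //; lra.
    rewrite /mkstar /cf /= mulNr mulrC divfK ?gt_eqF //.
    by congr a; ring.
Qed.
Section Graph.
Variables (X : topologicalType) (m : nat) (a : 'I_m -> R -> X).
Hypotheses (hX : hausdorff_space X) (harc : forall i, is_arc (a i))
  (hcov : \bigcup_i (a i @` @unit_seg R) = [set: X])
  (hint : forall i j, i != j ->
       (a i @` @unit_seg R) `&` (a j @` @unit_seg R) `<=`
       ([set a i 0; a i 1] `&` [set a j 0; a j 1])).

Lemma ord_le_mid i s e : 0 < e -> 0 < s - e -> s + e < 1 -> ord_le (a i s) 2.
Proof.
move=> e0 se1 se2 U nU.
have s01 : 0 <= s <= 1 by apply/andP; split; lra.
have [d d0 Hd] := ed_of_within (harc i).1 s01 nU.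
have [d' d'0 [d'd d'e]] := small2 d0 e0.
exists (a i @` [set t | s - d' < t < s + d']); split.
- by apply: open_mid => //; lra.
- by exists s => //; apply/andP; split; lra.
- move=> z [t /andP[t1 t2] <-]; apply: Hd.
    by apply/andP; split; lra.
  by rewrite ltr_norml; apply/andP; split; lra.
- exists (fun k : 'I_2 => if val k == 0%N then a i (s - d') else a i (s + d')).
  move=> z [cz nVz].
  have cl : closed (a i @` [set t | s - d' <= t <= s + d']).
    by apply: img_closed => //; lra.
  have : (a i @` [set t | s - d' <= t <= s + d']) z.
    rewrite ((closure_id _).1 cl); apply: (closureS _ cz).
    by move=> w [t /andP[t1 t2] <-]; exists t => //; apply/andP; split; lra.
  case=> t /andP[t1 t2] tz.
  have [h1|h1] := eqVneq t (s - d').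
    by exists ord0 => //; rewrite -tz h1.
  have [h2|h2] := eqVneq t (s + d').
    by exists ord_max => //; rewrite -tz h2.
  exfalso; apply: nVz; exists t => //.
  by apply/andP; split; rewrite lt_neqAle ?t1 ?t2 ?andbT // eq_sym.
Qed.

Lemma ord_ge_mid i s e : 0 < e -> 0 < s - e -> s + e < 1 ->
  forall n, ord_le (a i s) n -> (2 <= n)%N.
Proof.
move=> e0 se1 se2 n H; case: (leqP 2 n) => // nlt2; exfalso.
set U0 := a i @` [set t | s - e < t < s + e].
have oU0 : open U0 by apply: open_mid => //; lra.
have U0s : U0 (a i s) by exists s => //; apply/andP; split; lra.
have [V [oV Vs VU [f hf]]] := H U0 (open_nbhs_nbhs (conj oU0 U0s)).
have nVr : forall t, ~ (s - e < t < s + e) -> 0 <= t <= 1 -> ~ V (a i t).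
  move=> t nt t01 /VU [u /andP[u1 u2] eq].
  have u01 : 0 <= u <= 1 by apply/andP; split; lra.
  apply: nt; rewrite -(arc_inj (harc i) u01 t01 eq); by rewrite u1 u2.
have [t1 [/andP[st1 t1e] c1 n1]] : exists t, [/\ s < t <= s + e,
    closure V (a i t) & ~ V (a i t)].
  apply: (@boundary_pt X (a i) s (s + e) V) => //; first lra.
  - by apply: cont_sub => //; lra.
  - by apply: nVr; [move=> /andP[_]; lra | apply/andP; split; lra].
have [t2 [/andP[t2e st2] c2 n2]] : exists t, [/\ s - e <= t < s,
    closure V (a i t) & ~ V (a i t)].
  apply: (@boundary_pt' X (a i) (s - e) s V) => //; first lra.
  - by apply: cont_sub => //; lra.
  - by apply: nVr; [move=> /andP[]; lra | apply/andP; split; lra].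
have [k1 _ fk1] := hf _ (conj c1 n1).
have [k2 _ fk2] := hf _ (conj c2 n2).
have k12 : k1 = k2.
  have h1 := ltn_ord k1; have h2 := ltn_ord k2.
  have e12 : nat_of_ord k1 = nat_of_ord k2 by lia.
  exact: val_inj.
have : a i t1 = a i t2 by rewrite -fk1 -fk2 k12.
move/arc_inj => /(_ (harc i)).
have t101 : 0 <= t1 <= 1 by apply/andP; split; lra.
have t201 : 0 <= t2 <= 1 by apply/andP; split; lra.
move=> /(_ t101 t201); lra.
Qed.

Lemma find_mid (x2 : X) (A2 : set X) : nbhs x2 A2 -> exists i s e, [/\ 0 < e, 0 < s - e,
   s + e < 1 & forall t, s - e < t < s + e -> A2 (a i t)].
Proof.
move=> nA.
have : [set: X] x2 by [].
rewrite -hcov; case=> i _ [s0 s001 hx]; subst x2.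
have [d d0 Hd] := ed_of_within (harc i).1 s001 nA.
case/andP: s001 => s00 s01.
have key : forall s, 0 < s < 1 -> `|s - s0| < d -> exists i0 s e, [/\ 0 < e, 0 < s - e,
   s + e < 1 & forall t, s - e < t < s + e -> A2 (a i0 t)].
  move=> s /andP[sa sb] sd.
  have [e1 e10 [e1a e1b]] := small2 sa (ltac:(lra) : 0 < 1 - s).
  have [e e0 [ea eb]] := small2 e10 (ltac:(lra) : 0 < d - `|s - s0|).
  exists i, s, e; split; try lra.
  move=> t /andP[t1 t2]; apply: Hd.
    by apply/andP; split; lra.
  have hw : - `|s - s0| <= s - s0 <= `|s - s0| by rewrite -ler_norml.
  case/andP: hw => hw1 hw2.
  rewrite ltr_norml; apply/andP; split; lra.
have [eta eta0 [etad eta4]] := small2 d0 (ltac:(lra) : (0:R) < 1/4).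
have [sl|sh] := ltP s0 (1/2).
- apply: (key (s0 + eta)); first by apply/andP; split; lra.
  by rewrite (_ : s0 + eta - s0 = eta) ?gtr0_norm //; ring.
- apply: (key (s0 - eta)); first by apply/andP; split; lra.
  by rewrite (_ : s0 - eta - s0 = - eta) ?normrN ?gtr0_norm //; ring.
Qed.

Lemma graph_star (x2 : X) (A2 : set X) : nbhs x2 A2 -> exists y (b : 'I_2 -> R -> X),
  [/\ ord_eq y 2, star_data y b, open (open_star b), open_star b y &
      open_star b `<=` A2].
Proof.
move=> /find_mid [i [s [e [e0 se1 se2 HA]]]].
exists (a i s), (mkstar (a i) s e); split.
- by split; [apply: ord_le_mid e0 se1 se2 | apply: ord_ge_mid e0 se1 se2].
- by apply: star_ok => //; lra.
- by rewrite open_star_eq //; apply: open_mid => //; lra.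
- by rewrite open_star_eq //; exists s => //; apply/andP; split; lra.
- by rewrite open_star_eq // => z [t ht <-]; exact: HA.
Qed.
End Graph.
End S.
Lemma nbhs_rect (R : realType) (B G : pseudoMetricType R) (z : B * G)
  (A : set (B * G)) : nbhs z A ->
  exists A1 A2, [/\ nbhs z.1 A1, nbhs z.2 A2 & A1 `*` A2 `<=` A].
Proof. by case => /= -[A1 A2] /= [n1 n2] sub; exists A1, A2. Qed.

Lemma nbhs_fst (R : realType) (B G : pseudoMetricType R) (z : B * G)
  (U : set B) : nbhs z.1 U -> nbhs z [set w | U w.1].
Proof.
move=> h; exists (U, setT) => //=; first by split => //; exact: filterT.
by move=> [a b] /= [].
Qed.

Unset Implicit Arguments.
Set Strict Implicit.
Local Close Scope ring_scope.

Theorem lemma9 (R : realType) (E B G : pseudoMetricType R) (p : E -> B)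
    (M : set E) :
  @compact_graph_bundle R E B G p ->
  compact M ->
  @End_s R E B G p M = M ->
  interior (closure M) = set0.
Proof.
move=> [[hE cE] [hB cB] [hG gG] [cp sp] triv] cM EM.
have clM : closed M by apply: compact_closed.
rewrite -((closure_id M).1 clM).
apply/seteqP; split => // x nx; exfalso.
have Mx : M x := nbhs_singleton nx.
have [U [h [g [Upx [oU [h1 [gh hg ch cg]]]]]]] := triv (p x).
set z0 := h x.
have z01 : z0.1 = p x := h1 x Upx.
have gz0 : g z0 = x := gh x Upx.
have Uz0 : U z0.1 by rewrite z01.
have nS : nbhs z0 [set z | U z.1].
  by apply: nbhs_fst; apply: open_nbhs_nbhs; split.
have nW : nbhs z0 [set z | U z.1 /\ M (g z)].
  have nx' : nbhs (g z0) M by rewrite gz0.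
  have nSM := (subspace_continuousP _ _).1 cg z0 Uz0 M nx'.
  by apply: filterS (filterI nS nSM) => z [Sz Hz]; split => //; exact: Hz.
have [A1 [A2 [nA1 nA2 sub]]] := nbhs_rect nW.
case: gG => mm [aa [harc [hcov hint]]].
have [y [b [oy sb ob yb bA2]]] := graph_star hG harc hcov hint nA2.
set x1 := z0.1.
have Ux1 : U x1 by [].
have Mz : M (g (x1, y)) by have [] := sub (x1, y) (conj (nbhs_singleton nA1) (bA2 _ yb)).
have [hx' Upx'] := hg (x1, y) Ux1.
set x' := g (x1, y).
have : @End_s R E B G p M x' by rewrite EM.
case=> _; apply; split => //.
exists U, h, g; split => //.
rewrite hx' /=.
exists 2%N, (U `&` A1°), b, [set: 'I_2]%SET; split => //.
- by split; [exact: openI oU (@open_interior _ _) | split => //; exact: interior_subset].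
have key : forall w : B * G, (U `&` A1°) w.1 -> open_star b w.2 ->
    exists2 x0 : E, M x0 /\ U (p x0) & h x0 = w.
  move=> [w1 w2] /= [_ /interior_subset Aw1] /bA2 Aw2.
  have [Uw Mw] := sub (w1, w2) (conj Aw1 Aw2).
  have [hw Upw] := hg (w1, w2) Uw.
  by exists (g (w1, w2)).
have Ox1 : (U `&` A1°) x1 by split.
split.
- by rewrite cardsT card_ord.
- move=> t; split; first by case=> _ [].
  move=> st; split; last by split.
  exact: (key (x1, t)).
- move=> z [t [_ [Oz _]]]; exists [set: 'I_2]%SET; split => //.
    by rewrite cardsT card_ord.
  move=> t'; split; first by case=> _ [].
  move=> st; split; last by split.
  exact: (key (z, t')).
Qed.
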